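(* For all integers $n,k\geq 1$, the RBM variety and the RBM model factor as Hadamard powers: $V^k_n=(V^1_n)^{[k]}$ and $M^k_n=(M^1_n)^{[k]}$.
   Context: For parameters $W\in\mathbb{R}^{k\times n}$, $b\in\mathbb{R}^n$, $c\in\mathbb{R}^k$ and $v\in\{0,1\}^n$, $h\in\{0,1\}^k$ put $\psi(v,h)=\exp(h^{\top}Wv+b^{\top}v+c^{\top}h)$ and $p(v)=\frac1Z\sum_{h}\psi(v,h)$ with $Z=\sum_{v,h}\psi(v,h)$. Equivalently, with $\gamma_i=e^{c_i}$, $\omega_{ij}=e^{W_{ij}}$, $\beta_j=e^{b_j}$, $p(v)=\frac1Z\beta_1^{v_1}\cdots\beta_n^{v_n}\prod_{i=1}^k(1+\gamma_i\omega_{i1}^{v_1}\cdots\omega_{in}^{v_n})$. The RBM model $M^k_n$ is the set of all such $(p(v))_{v\in\{0,1\}^n}$ in the open simplex $\Delta_{2^n-1}$. The RBM variety $V^k_n$ is the Zariski closure of $M^k_n$ in the complex projective space $\mathbb{P}^{2^n-1}$. For subvarieties $X,Y\subseteq\mathbb{P}^m$, the Hadamard product $X*Y$ is the closure of the image of the rational map $X\times Y\dashrightarrow\mathbb{P}^m$, $(x,y)\mapsto(x_0y_0:\dots:x_my_m)$; $X^{[1]}=X$ and $X^{[k]}=X*X^{[k-1]}$. For a subset $M$ of an open probability simplex, $M^{[k]}$ is the set of vectors obtained by componentwise multiplication of $k$ elements of $M$ followed by rescaling so that the coordinates sum to one. *)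

(* Defs.v *)
From HB Require Import structures.
From mathcomp Require Import all_boot all_order all_algebra.
From mathcomp Require Import all_classical all_reals.
From mathcomp.analysis Require Import sequences exp.
From mathcomp Require Import complex.
Set Implicit Arguments. Unset Strict Implicit. Unset Printing Implicit Defensive.
Import Order.TTheory GRing.Theory Num.Theory.
Local Open Scope ring_scope.
Local Open Scope classical_set_scope.

(* A subset of projective space is
   represented by the cone of its nonzero representative vectors. ---------- *)

(* A polynomial in the variables x_i (i : I): a finite list of terms
   (exponent vector, coefficient). *)
Definition poly_terms (I : finType) (F : fieldType) := seq ({ffun I -> nat} * F).

Definition peval (I : finType) (F : fieldType) (p : poly_terms I F) (x : I -> F) : F :=
  \sum_(t <- p) t.2 * \prod_(i : I) x i ^+ t.1 i.

Definition homog (I : finType) (F : fieldType) (d : nat) (p : poly_terms I F) : bool :=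
  all (fun t : {ffun I -> nat} * F => (\sum_(i : I) t.1 i)%N == d) p.

Definition nonzero_vec (I : finType) (F : fieldType) (x : I -> F) : Prop :=
  exists i, x i != 0.

Definition zariski_closure (I : finType) (F : fieldType) (S : set (I -> F)) : set (I -> F) :=
  [set x | nonzero_vec x /\
     forall (d : nat) (p : poly_terms I F), homog d p ->
       (forall y, S y -> peval p y = 0) -> peval p x = 0].

Definition hadamard (I : finType) (F : fieldType) (x y : I -> F) : I -> F :=
  fun i => x i * y i.

Definition hadamard_prod (I : finType) (F : fieldType) (X Y : set (I -> F)) : set (I -> F) :=
  zariski_closure [set z | exists x y, X x /\ Y y /\ z = hadamard x y /\ nonzero_vec z].

Fixpoint hadamard_pow (I : finType) (F : fieldType) (X : set (I -> F)) (k : nat) : set (I -> F) :=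
  match k with
  | 0 => X
  | 1 => X
  | k'.+1 => hadamard_prod X (hadamard_pow X k')
  end.

Definition states (n : nat) := {ffun 'I_n -> bool}.

Definition bit (b : bool) (R : realType) : R := if b then 1 else 0.

Definition rbm_psi (R : realType) (n k : nat)
    (W : 'I_k -> 'I_n -> R) (b : 'I_n -> R) (c : 'I_k -> R)
    (v : states n) (h : states k) : R :=
  expR (\sum_(i < k) \sum_(j < n) bit (h i) R * W i j * bit (v j) R
        + \sum_(j < n) b j * bit (v j) R
        + \sum_(i < k) c i * bit (h i) R).

Definition rbm_Z (R : realType) (n k : nat)
    (W : 'I_k -> 'I_n -> R) (b : 'I_n -> R) (c : 'I_k -> R) : R :=
  \sum_(v : states n) \sum_(h : states k) rbm_psi W b c v h.

Definition rbm_dist (R : realType) (n k : nat)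
    (W : 'I_k -> 'I_n -> R) (b : 'I_n -> R) (c : 'I_k -> R) : states n -> R :=
  fun v => (\sum_(h : states k) rbm_psi W b c v h) / rbm_Z W b c.

Definition open_simplex (R : realType) (I : finType) : set (I -> R) :=
  [set p | (forall i, 0 < p i) /\ \sum_(i : I) p i = 1].

Definition rbm_model (R : realType) (n k : nat) : set (states n -> R) :=
  [set p | open_simplex p /\
     exists (W : 'I_k -> 'I_n -> R) (b : 'I_n -> R) (c : 'I_k -> R),
       p = rbm_dist W b c].
Arguments rbm_model R n k : clear implicits.

Definition to_complex (R : realType) (I : finType) (p : I -> R) : I -> R[i] :=
  fun i => Complex (p i) 0.

Definition rbm_variety (R : realType) (n k : nat) : set (states n -> R[i]) :=
  zariski_closure ((@to_complex R (states n)) @` rbm_model R n k).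
Arguments rbm_variety R n k : clear implicits.

Definition model_hadamard_pow (R : realType) (I : finType) (M : set (I -> R)) (k : nat)
    : set (I -> R) :=
  [set p | exists ps : 'I_k -> (I -> R), (forall l, M (ps l)) /\
     p = (fun i => (\prod_(l < k) ps l i) / \sum_(j : I) \prod_(l < k) ps l j)].

(* Main.v *)
Require Import Defs.
From HB Require Import structures.
From mathcomp Require Import all_boot all_order all_algebra.
From mathcomp Require Import all_classical all_reals.
From mathcomp.analysis Require Import sequences exp. From mathcomp Require Import complex.
From mathcomp Require Import ring lra.
Set Implicit Arguments. Unset Strict Implicit. Unset Printing Implicit Defensive.
Import Order.TTheory GRing.Theory Num.Theory.
Local Open Scope ring_scope.
Local Open Scope classical_set_scope.

Section Poly.
Variables (I : finType) (F : fieldType).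

Lemma cl_mono (S T : set (I -> F)) :
  S `<=` zariski_closure T -> zariski_closure S `<=` zariski_closure T.
Proof.
move=> ST x [nx Hx]; split => // d p hp Hp; apply: (Hx d p hp) => y Sy.
by have [_ H] := ST y Sy; exact: (H d p hp Hp).
Qed.

Lemma sub_cl (T : set (I -> F)) :
  (forall x, T x -> nonzero_vec x) -> T `<=` zariski_closure T.
Proof. by move=> HT x Tx; split; [exact: HT|move=> d p _ Hp; exact: Hp]. Qed.

Lemma peval_scale d (p : poly_terms I F) a x : homog d p ->
  peval p (fun i => a * x i) = a ^+ d * peval p x.
Proof.
rewrite /homog /peval => /allP hp.
rewrite mulr_sumr big_seq [RHS]big_seq; apply: eq_bigr => t tp.
under eq_bigr do rewrite exprMn.
by rewrite big_split /= prodrXr (eqP (hp t tp)) mulrCA.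
Qed.

Lemma cl_scale (T : set (I -> F)) a x : a != 0 ->
  zariski_closure T x -> zariski_closure T (fun i => a * x i).
Proof.
move=> a0 [[i xi] Hx]; split; first by exists i; rewrite mulf_neq0.
move=> d p hp Hp; rewrite (peval_scale _ _ hp) (Hx d p hp Hp) mulr0 //.
Qed.

Definition psubst (p : poly_terms I F) (y : I -> F) : poly_terms I F :=
  map (fun t : {ffun I -> nat} * F => (t.1, t.2 * \prod_i y i ^+ t.1 i)) p.

Lemma homog_psubst d p y : homog d p -> homog d (psubst p y).
Proof. by rewrite /homog /psubst all_map. Qed.

Lemma peval_psubst p y x : peval (psubst p y) x = peval p (hadamard x y).
Proof.
rewrite /peval /psubst big_map; apply: eq_bigr => t _ /=.
under [in RHS]eq_bigr do rewrite /hadamard exprMn.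
by rewrite big_split /= -mulrA [X in _ * X]mulrC.
Qed.

End Poly.

Section RBM.
Variables (R : realType) (n : nat).

Definition dot (b : 'I_n -> R) (v : states n) := \sum_(j < n) b j * bit (v j) R.

Definition fU k (W : 'I_k -> 'I_n -> R) (b : 'I_n -> R) (c : 'I_k -> R) (v : states n) :=
  expR (dot b v) * \prod_(i < k) (1 + expR (c i + dot (W i) v)).

Lemma psum k (W : 'I_k -> 'I_n -> R) b c v :
  \sum_(h : states k) rbm_psi W b c v h = fU W b c v.
Proof.
have E h : rbm_psi W b c v h =
   expR (dot b v) * \prod_(i < k) expR (bit (h i) R * (c i + dot (W i) v)).
  rewrite /rbm_psi -expR_sum -expRD; congr expR.
  have -> : \sum_(i < k) bit (h i) R * (c i + dot (W i) v) =
     \sum_(i < k) \sum_(j < n) bit (h i) R * W i j * bit (v j) R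
     + \sum_(i < k) c i * bit (h i) R.
    rewrite -big_split /=; apply: eq_bigr => i _.
    rewrite mulrDr addrC [bit _ _ * c i]mulrC; congr (_ + _).
    rewrite /dot mulr_sumr; apply: eq_bigr => j _; by rewrite mulrA.
  rewrite /dot; lra.
under eq_bigr do rewrite E.
rewrite -mulr_sumr /fU; congr (_ * _).
rewrite -(bigA_distr_bigA (fun i (x : bool) => expR (bit x R * (c i + dot (W i) v)))) /=.
apply: eq_bigr => i _; rewrite big_bool /= /bit mul1r mul0r expR0 addrC //.
Qed.

Lemma fU_gt0 k (W : 'I_k -> 'I_n -> R) b c v : 0 < fU W b c v.
Proof.
rewrite /fU mulr_gt0 ?expR_gt0 // prodr_gt0 // => i _.
by rewrite addr_gt0 ?expR_gt0.
Qed.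

Definition normalize (I : finType) (g : I -> R) : I -> R :=
  fun v => g v / \sum_u g u.

Lemma rbm_distE k (W : 'I_k -> 'I_n -> R) b c :
  rbm_dist W b c = normalize (fU W b c).
Proof.
apply: funext => v; rewrite /rbm_dist /normalize /rbm_Z psum.
by under eq_bigr do rewrite psum.
Qed.

Lemma norm_scale (I : finType) (g : I -> R) C : C != 0 ->
  normalize (fun v => g v * C) = normalize g.
Proof.
move=> C0; apply: funext => v; rewrite /normalize -mulr_suml invfM.
by rewrite mulrACA mulfV // mulr1.
Qed.

Lemma sum_gt0 (I : finType) (i0 : I) (g : I -> R) :
  (forall i, 0 < g i) -> 0 < \sum_i g i.
Proof.
move=> gp; rewrite (bigD1 i0) //=.
have : 0 <= \sum_(i | i != i0) g i by apply: sumr_ge0 => i _; exact: ltW.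
have := gp i0; lra.
Qed.

Lemma normalize_simplex (I : finType) (i0 : I) (g : I -> R) :
  (forall i, 0 < g i) -> open_simplex (normalize g).
Proof.
move=> gp; have S0 := sum_gt0 i0 gp; split.
  by move=> i; rewrite /normalize divr_gt0.
by rewrite /normalize -mulr_suml mulfV // gt_eqF.
Qed.

Lemma rbm_in k (W : 'I_k -> 'I_n -> R) b c : rbm_model R n k (rbm_dist W b c).
Proof.
split; last by exists W, b, c.
by rewrite rbm_distE; apply: (normalize_simplex [ffun=> false]) => v; exact: fU_gt0.
Qed.

Lemma fU1 (W : 'I_1 -> 'I_n -> R) b c v :
  fU W b c v = expR (dot b v) * (1 + expR (c ord0 + dot (W ord0) v)).
Proof. by rewrite /fU big_ord1. Qed.

Lemma fU_prod k (Ws : 'I_k -> 'I_1 -> 'I_n -> R) bs cs v :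
  \prod_(l < k) fU (Ws l) (bs l) (cs l) v =
  fU (fun i => Ws i ord0) (fun j => \sum_(l < k) bs l j) (fun i => cs i ord0) v.
Proof.
under eq_bigr do rewrite fU1.
rewrite big_split /= -expR_sum /fU; congr (expR _ * _).
rewrite /dot exchange_big /=; apply: eq_bigr => j _; by rewrite mulr_suml.
Qed.

End RBM.

Section Model.
Variables (R : realType) (n : nat).

Lemma prod_dist k (Ws : 'I_k -> 'I_1 -> 'I_n -> R) bs cs :
  normalize (fun v => \prod_(l < k) rbm_dist (Ws l) (bs l) (cs l) v) =
  rbm_dist (fun i => Ws i ord0) (fun j => \sum_(l < k) bs l j) (fun i => cs i ord0).
Proof.
have -> : (fun v => \prod_(l < k) rbm_dist (Ws l) (bs l) (cs l) v) =
  (fun v => fU (fun i => Ws i ord0) (fun j => \sum_(l < k) bs l j) (fun i => cs i ord0) v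
    * (\prod_(l < k) \sum_u fU (Ws l) (bs l) (cs l) u)^-1).
  apply: funext => v; rewrite -fU_prod -prodfV -big_split /=.
  by apply: eq_bigr => l _; rewrite rbm_distE.
rewrite norm_scale ?rbm_distE // invr_eq0 gt_eqF // prodr_gt0 // => l _.
by apply: (sum_gt0 [ffun=> false]) => u; exact: fU_gt0.
Qed.

Lemma normE (I : finType) (g : I -> R) :
  (fun i => g i / \sum_j g j) = normalize g.
Proof. by []. Qed.

Lemma model_eq k : (1 <= k)%N -> rbm_model R n k = model_hadamard_pow (rbm_model R n 1) k.
Proof.
move=> k1; apply/seteqP; split => p.
- move=> [_ [W [b [c ->]]]].
  exists (fun l => rbm_dist (fun _ : 'I_1 => W l) (fun j => b j / k%:R) (fun _ => c l)).
  split; first by move=> l; exact: rbm_in.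
  have E := prod_dist (fun l (_ : 'I_1) => W l) (fun l j => b j / k%:R) (fun l (_ : 'I_1) => c l).
  rewrite /normalize /= in E.
  rewrite E.
  have -> : (fun j => \sum_(l < k) b j / k%:R) = b.
    apply: funext => j; rewrite sumr_const card_ord -[_ *+ k]mulr_natr mulfVK //.
    by rewrite pnatr_eq0 -lt0n.
  by [].
- move=> [ps [Hps ->]].
  have : forall l, exists t : ('I_1 -> 'I_n -> R) * ('I_n -> R) * ('I_1 -> R),
      ps l = rbm_dist t.1.1 t.1.2 t.2.
    move=> l; have [_ [W [b [c E]]]] := Hps l; by exists (W, b, c).
  move=> /boolp.choice [f Hf].
  have -> : ps = fun l => rbm_dist (f l).1.1 (f l).1.2 (f l).2.
    by apply: funext => l; exact: Hf.
  have E := prod_dist (fun l => (f l).1.1) (fun l => (f l).1.2) (fun l => (f l).2).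
  rewrite /normalize /= in E.
  rewrite E; exact: rbm_in.
Qed.

End Model.

Section Var.
Variables (R : realType) (I : finType) (i0 : I) (M : nat -> set (I -> R)).
Hypothesis Hm : forall j, (1 <= j)%N -> M j = model_hadamard_pow (M 1) j.
Hypothesis Hpos : forall j p, M j p -> forall i, 0 < p i.

Local Notation tc := (@to_complex R I).

Lemma tcM x y : tc (fun i => x i * y i) = hadamard (tc x) (tc y).
Proof.
apply: funext => i; rewrite /tc /to_complex /hadamard.
by apply/eqP; rewrite eq_complex /= !mulr0 !mul0r subr0 addr0 !eqxx.
Qed.

Lemma tcS a x : tc (fun i => a * x i) = fun i => Complex a 0 * tc x i.
Proof.
apply: funext => i; rewrite /tc /to_complex.
by apply/eqP; rewrite eq_complex /= !mulr0 !mul0r subr0 addr0 !eqxx.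
Qed.

Lemma C_neq0 (a : R) : a != 0 -> Complex a 0 != 0.
Proof.
move=> a0; apply/negP => /eqP E.
have : a = 0 := congr1 (fun z : R[i] => let: Complex u _ := z in u) E.
by move/eqP; rewrite (negbTE a0).
Qed.

Lemma tc_nz x : (forall i, 0 < x i) -> nonzero_vec (tc x).
Proof. by move=> xp; exists i0; apply: C_neq0; rewrite gt_eqF. Qed.

Lemma prod_pos k (ps : 'I_k -> I -> R) i :
  (forall l, M 1 (ps l)) -> 0 < \prod_(l < k) ps l i.
Proof. by move=> Hps; apply: prodr_gt0 => l _; exact: (Hpos (Hps l)). Qed.

Lemma F1 k s : (1 <= k)%N -> M k.+1 s -> exists m1 m' (lam : R),
  [/\ M 1 m1, M k m', lam != 0 & s = fun i => lam * (m1 i * m' i)].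
Proof.
move=> k1; rewrite Hm // => -[ps [Hps ->]].
set P' := fun i => \prod_(l < k) ps (lift ord0 l) i.
have Z'0 : 0 < \sum_j P' j.
  by apply: (sum_gt0 i0) => i; exact: (@prod_pos k (fun l => ps (lift ord0 l)) i (fun l => Hps _)).
have Z0 : 0 < \sum_j \prod_(l < k.+1) ps l j.
  by apply: (sum_gt0 i0) => i; apply: prod_pos => l; auto.
exists (ps ord0), (fun i => P' i / \sum_j P' j),
  ((\sum_j P' j) / \sum_j \prod_(l < k.+1) ps l j).
split => //.
- by rewrite Hm //; exists (fun l => ps (lift ord0 l)).
- by rewrite mulf_neq0 // ?invr_eq0 gt_eqF.
apply: funext => i; rewrite big_ord_recl -/(P' i).
field; by rewrite !gt_eqF.
Qed.

Lemma F2 k m1 m' : (1 <= k)%N -> M 1 m1 -> M k m' -> exists s (lam : R),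
  [/\ M k.+1 s, lam != 0 & (fun i => m1 i * m' i) = fun i => lam * s i].
Proof.
move=> k1 H1; rewrite Hm // => -[qs [Hqs ->]].
pose ps (l : 'I_k.+1) := if unlift ord0 l is Some l' then qs l' else m1.
have Hps l : M 1 (ps l) by rewrite /ps; case: unlift.
have Pe i : \prod_(l < k.+1) ps l i = m1 i * \prod_(l < k) qs l i.
  by rewrite big_ord_recl /ps unlift_none; under eq_bigr do rewrite liftK.
have Z'0 : 0 < \sum_j \prod_(l < k) qs l j.
  by apply: (sum_gt0 i0) => i; apply: prod_pos => l; auto.
have Z0 : 0 < \sum_j \prod_(l < k.+1) ps l j.
  by apply: (sum_gt0 i0) => i; apply: prod_pos => l; auto.
exists (fun i => \prod_(l < k.+1) ps l i / \sum_j \prod_(l < k.+1) ps l j).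
exists ((\sum_j \prod_(l < k.+1) ps l j) / \sum_j \prod_(l < k) qs l j).
split.
- by rewrite Hm //; exists ps.
- by rewrite mulf_neq0 // ?invr_eq0 gt_eqF.
apply: funext => i; rewrite Pe.
field; rewrite !gt_eqF //.
Qed.

Let V j := zariski_closure (tc @` M j).

Lemma S_sub j : tc @` M j `<=` V j.
Proof. by apply: sub_cl => _ [m Hm' <-]; apply: tc_nz; exact: Hpos Hm'. Qed.

Lemma hadC (F : fieldType) (x y : I -> F) : hadamard x y = hadamard y x.
Proof. by apply: funext => i; rewrite /hadamard mulrC. Qed.

Lemma step k : (1 <= k)%N -> V k.+1 = hadamard_prod (V 1) (V k).
Proof.
move=> k1; apply/seteqP; split.
- apply: cl_mono => _ [s Ms <-].
  have [m1 [m' [lam [H1 H2 l0 ->]]]] := F1 k1 Ms.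
  rewrite tcS; apply: (cl_scale (C_neq0 l0)).
  apply: sub_cl; first by move=> z [x [y [_ [_ [_ nz]]]]].
  exists (tc m1), (tc m'); split; first exact: S_sub.
  split; first exact: S_sub.
  split; first by rewrite tcM.
  apply: tc_nz => i; apply: mulr_gt0; [exact: (Hpos H1)|exact: (Hpos H2)].
- rewrite /hadamard_prod; apply: cl_mono => z [a [b [Va [Vb [-> nz]]]]].
  split => // d p hp Hp.
  have step1 m1 m' : M 1 m1 -> M k m' -> peval p (hadamard (tc m1) (tc m')) = 0.
    move=> H1 H2; have [s [lam [Hs l0 E]]] := F2 k1 H1 H2.
    rewrite -tcM E tcS (peval_scale _ _ hp) (Hp (tc s)) ?mulr0 //; by exists s.
  have step2 m' : M k m' -> peval p (hadamard a (tc m')) = 0.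
    move=> H2; rewrite -peval_psubst; case: Va => _ Ha.
    apply: (Ha d); first exact: homog_psubst.
    by move=> _ [m1 H1 <-]; rewrite peval_psubst; exact: step1.
  rewrite hadC -peval_psubst; case: Vb => _ Hb.
  apply: (Hb d); first exact: homog_psubst.
  by move=> _ [m' H' <-]; rewrite peval_psubst hadC; exact: step2.
Qed.

Lemma var_eq k : (1 <= k)%N -> V k = hadamard_pow (V 1) k.
Proof.
case: k => // k _; elim: k => [|k IH] //.
by rewrite step // IH.
Qed.

End Var.

Theorem proposition2p1 (R : realType) (n k : nat) :
  (1 <= n)%N -> (1 <= k)%N ->
  rbm_variety R n k = hadamard_pow (rbm_variety R n 1) k /\
  rbm_model R n k = model_hadamard_pow (rbm_model R n 1) k.
Proof.
move=> _ k1; split; last exact: model_eq.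
have Hm : forall j, (1 <= j)%N ->
    rbm_model R n j = model_hadamard_pow (rbm_model R n 1) j.
  by move=> j j1; exact: model_eq.
have Hpos : forall j p, rbm_model R n j p -> forall i, 0 < p i.
  by move=> j p [[H _] _].
exact: (@var_eq R (states n) [ffun=> false] (fun j => rbm_model R n j) Hm Hpos k k1).
Qed.
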